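(* Let $r\le n$ and let $A$ be an $r\times n$ matrix over a local ring $(R,\mathfrak{m})$. If all $r\times r$ minors of $A$ vanish and the corank of $A\pmod{\mathfrak{m}}$ is $1$, then the left kernel of $A$ is a free $R$-module of rank $1$.
   Context: The corank of an $r\times n$ matrix (with $r\le n$) over the residue field means $r$ minus its rank; the left kernel of $A$ is $\{v\in R^r: v^TA=0\}$. *)

(* Defs.v *)
From HB Require Import structures.
From mathcomp Require Import all_boot all_order all_algebra.
Set Implicit Arguments. Unset Strict Implicit. Unset Printing Implicit Defensive.
Import GRing.Theory.
Local Open Scope ring_scope.

(* A (commutative) local ring: the non-units are closed under addition
   (so they form the unique maximal ideal m). *)
Definition is_local_ring (R : comUnitRingType) : Prop :=
  forall x y : R, x \notin GRing.unit -> y \notin GRing.unit ->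
    x + y \notin GRing.unit.

(* pi : R -> k is a residue map of the local ring R: a surjective ring
   morphism onto the field k whose kernel is exactly the maximal ideal
   m = non-units of R, so that k is (isomorphic to) R/m. *)
Definition residue_map (R : comUnitRingType) (k : fieldType)
  (pi : {rmorphism R -> k}) : Prop :=
  (forall y : k, exists x : R, pi x = y) /\
  (forall x : R, (pi x == 0) = (x \notin GRing.unit)).

Definition corank (k : fieldType) (r n : nat) (B : 'M[k]_(r, n)) : nat :=
  (r - \rank B)%N.

Definition left_kernel (R : comUnitRingType) (r n : nat) (A : 'M[R]_(r, n))
  : pred 'rV[R]_r := fun v => v *m A == 0.

Definition free_rank1 (R : comUnitRingType) (r : nat) (K : pred 'rV[R]_r) : Prop :=
  exists v, [/\ v \in K,
                (forall w, w \in K -> exists c : R, w = c *: v),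
                (forall w, (exists c : R, w = c *: v) -> w \in K) &
                (forall c : R, c *: v = 0 -> c = 0)].

(* Main.v *)
Require Import Defs.
From HB Require Import structures.
From mathcomp Require Import all_boot all_order all_algebra.
From mathcomp Require Import zify.
Import GRing.Theory.
Local Open Scope ring_scope.

Lemma field_minor (F : fieldType) s n (B : 'M[F]_(s.+1, n)) :
  \rank B = s -> exists i0 (J : 'I_s -> 'I_n), \det (row' i0 (colsub J B)) != 0.
Proof.
move=> rkB.
set g := maxrankfun B.
have [i0 Hi0] : exists i0, i0 \notin codom g.
  case: (pickP [pred i | i \notin codom g]) => [i0 Hi0 | H]; first by exists i0.
  have : (#|'I_s.+1| <= #|codom g|)%N.
    by apply: subset_leq_card; apply/subsetP => x _; move: (H x) => /= /negbFE.
  rewrite card_codom; last exact: maxrankfun_inj.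
  by rewrite !card_ord => h; exfalso; move: h; rewrite rkB ltnn.
set C := row' i0 B.
have rkC : \rank C = s.
  apply/eqP; rewrite eqn_leq rank_leq_row /=.
  apply: (@leq_trans (\rank (rowsub g B))); first by rewrite (eq_maxrowsub B) rkB.
  apply: mxrankS; apply/row_subP => a.
  have : g a != i0 by apply: contraNneq Hi0 => <-; apply: codom_f.
  case: (unliftP i0 (g a)) => [x Ex _| ->]; last by rewrite eqxx.
  have -> : row a (rowsub g B) = row x C by apply/rowP => b; rewrite !mxE Ex.
  exact: row_sub.
have hfull : row_full C^T by rewrite /row_full mxrank_tr rkC.
exists i0, (fullrankfun hfull).
have := fullrowsub_full hfull; rewrite row_full_unit unitmxE unitfE.
have -> : rowsub (fullrankfun hfull) C^T = (row' i0 (colsub (fullrankfun hfull) B))^T.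
  by apply/matrixP => a b; rewrite !mxE.
by rewrite det_tr.
Qed.

Lemma det_colsub0 (R : comUnitRingType) r n (A : 'M[R]_(r,n)) :
  (forall f : 'I_r -> 'I_n, injective f -> \det (colsub f A) = 0) ->
  forall f : 'I_r -> 'I_n, \det (colsub f A) = 0.
Proof.
move=> H f; case: (boolP [exists c1, exists c2, (c1 != c2) && (f c1 == f c2)]).
  case/existsP=> c1 /existsP [c2 /andP [ne /eqP e]].
  rewrite -det_tr; apply: (determinant_alternate ne) => b; by rewrite !mxE e.
move=> Hn; apply: H => c1 c2 e; apply/eqP; apply: contraNT Hn => ne.
by apply/existsP; exists c1; apply/existsP; exists c2; rewrite ne e eqxx.
Qed.

Theorem lemma4p2p2 (R : comUnitRingType) (k : fieldType)
  (pi : {rmorphism R -> k}) (r n : nat) (A : 'M[R]_(r, n)) :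
  is_local_ring R ->
  residue_map pi ->
  (r <= n)%N ->
  (forall f : 'I_r -> 'I_n, injective f -> \det (colsub f A) = 0) ->
  corank (map_mx pi A) = 1%N ->
  free_rank1 (left_kernel A).
Proof.
move=> _ [_ hpi] _; case: r A => [|s] A Hdet; first by rewrite /corank sub0n.
rewrite /corank => Hc.
have rkB : \rank (map_mx pi A) = s.
  by move: (rank_leq_row (map_mx pi A)) Hc; lia.
have [i0 [J hJ]] := @field_minor _ _ _ _ rkB.
set M := colsub J A.
have Mu : row' i0 M \in unitmx.
  have := hpi (\det (row' i0 M)); rewrite -det_map_mx.
  have -> : map_mx pi (row' i0 M) = row' i0 (colsub J (map_mx pi A)).
    by apply/matrixP => a b; rewrite !mxE.
  by rewrite (negbTE hJ) unitmxE => /esym/negbFE.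
pose f := fun j (c : 'I_s.+1) => if unlift ord_max c is Some c' then J c' else j.
pose v := \row_i ((-1) ^+ (i + @ord_max s) * \det (row' i M)) : 'rV[R]_s.+1.
have cof : forall j i, cofactor (colsub (f j) A) i ord_max = v 0 i.
  move=> j i; rewrite /cofactor mxE; congr (_ * \det _).
  by apply/matrixP => a b; rewrite !mxE /f liftK.
have vK : v *m A = 0.
  apply/rowP => j; rewrite !mxE.
  transitivity (\det (colsub (f j) A)); last exact: (@det_colsub0 _ _ _ _ Hdet (f j)).
  rewrite (expand_det_col _ ord_max).
  by apply: eq_bigr => i _; rewrite cof mulrC !mxE /f unlift_none.
have vu : v 0 i0 \is a GRing.unit.
  by rewrite mxE unitrMr ?unitrX ?unitrN1 // -unitmxE.
clearbody v.
exists v; split.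
- by rewrite unfold_in /left_kernel vK.
- move=> w hw; exists (w 0 i0 / v 0 i0).
  set u := w - (w 0 i0 / v 0 i0) *: v.
  suff: u = 0 by move/eqP; rewrite subr_eq0 => /eqP.
  have u0 : u 0 i0 = 0 by rewrite !mxE divrK // subrr.
  have uA : u *m A = 0.
    rewrite mulmxBl -scalemxAl vK scaler0 subr0.
    by move: hw; rewrite unfold_in /left_kernel => /eqP.
  have uM : col' i0 u *m row' i0 M = 0.
    apply/rowP => b.
    have := congr1 (fun X : 'M[R]_(1,n) => X 0 (J b)) uA; rewrite !mxE (bigD1_ord i0) //= u0 mul0r add0r => h.
    rewrite -[RHS]h.
    by apply: eq_bigr => x _; rewrite !mxE.
  have cu : col' i0 u = 0 by rewrite -(mulmxK Mu (col' i0 u)) uM mul0mx.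
  apply/rowP => i; rewrite [RHS]mxE; case: (unliftP i0 i) => [x -> | ->]; last exact: u0.
  by move: (congr1 (fun X : 'M[R]_(1,s) => X 0 x) cu); rewrite !mxE.
- by move=> w [c ->]; rewrite unfold_in /left_kernel -scalemxAl vK scaler0.
- move=> c /(congr1 (fun X : 'M[R]_(1,s.+1) => X 0 i0)); rewrite !mxE => h.
  by rewrite -[c](mulrK vu) h mul0r.
Qed.
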